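(* For all $t\in\mathbb N$ the probability distribution $c_t$ on $\mathbb Z$ has mean $0$ and variance $v_t$.
   Context: Let $\mathsf r(n)$ be the number of (overlapping) occurrences of $\mathtt{11}$ in the binary expansion of $n\in\mathbb N=\{0,1,\dots\}$, and $d(t,n)=\mathsf r(n+t)-\mathsf r(n)$. For $k\in\mathbb Z$ let $c_t(k)$ be the asymptotic density (which exists) of $\{n\in\mathbb N:d(t,n)=k\}$; these values form a probability distribution $c_t$ on $\mathbb Z$. Define $(v_t)_{t\in\mathbb N}$ by $v_0=0$, $v_1=3/2$, and $v_{4t}=v_{2t}$, $v_{4t+2}=v_{2t+1}+1$, $v_{2t+1}=\frac{v_t+v_{t+1}}2+\frac34$ for all $t\in\mathbb N$. *)

(* Defs.v *)
From Stdlib Require Import Reals ZArith Arith List.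
From Coquelicot Require Import Coquelicot.
Open Scope R_scope.

(* Number of (overlapping) occurrences of the block 11 in the binary
   expansion of a positive number.  For p = 2q+1 (constructor xI q) the last
   digit is 1, and the second-to-last digit (= last digit of q) is 1 iff q is
   odd, i.e. q = xI _ or q = xH. *)
Fixpoint r_pos (p : positive) : nat :=
  match p with
  | xI q => (match q with xO _ => 0 | _ => 1 end + r_pos q)%nat
  | xO q => r_pos q
  | xH => 0%nat
  end.

Definition r (n : nat) : nat :=
  match N.of_nat n with
  | N0 => 0%nat
  | Npos p => r_pos p
  end.

Definition d (t n : nat) : Z := (Z.of_nat (r (n + t)) - Z.of_nat (r n))%Z.

Definition count_d (t : nat) (k : Z) (N : nat) : nat :=
  length (filter (fun n => Z.eqb (d t n) k) (seq 0 N)).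

Definition has_density_d (t : nat) (k : Z) (c : R) : Prop :=
  is_lim_seq (fun N => INR (count_d t k N) / INR N) c.

Definition Zsum_abs (f : Z -> R) (l : R) : Prop :=
  ex_series (fun n : nat => Rabs (f (Z.of_nat n)) + Rabs (f (- Z.of_nat n)%Z))
  /\ is_series (fun n : nat =>
        match n with
        | O => f 0%Z
        | S _ => f (Z.of_nat n) + f (- Z.of_nat n)%Z
        end) l.

(* Main.v *)
Require Import Defs.
From Stdlib Require Import Reals ZArith Arith List.
From Coquelicot Require Import Coquelicot.
From Stdlib Require Import Lia Lra NArith.
Open Scope R_scope.

Definition oddz (n : nat) : Z := if Nat.odd n then 1%Z else 0%Z.

Lemma odd_pos (p : positive) :
  Nat.odd (Pos.to_nat p) = match p with xO _ => false | _ => true end.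
Proof.
  destruct p.
  - rewrite Pos2Nat.inj_xI, Nat.odd_succ, Nat.even_spec. exists (Pos.to_nat p); lia.
  - rewrite Pos2Nat.inj_xO. apply Nat.odd_even.
  - reflexivity.
Qed.

Lemma r_double (n : nat) : r (2 * n) = r n.
Proof.
  unfold r. rewrite Nat2N.inj_double. destruct (N.of_nat n); reflexivity.
Qed.

Lemma r_sdouble (n : nat) : r (2 * n + 1) = (r n + if Nat.odd n then 1 else 0)%nat.
Proof.
  unfold r. replace (2 * n + 1)%nat with (S (2 * n)) by lia.
  rewrite Nat2N.inj_succ_double.
  destruct (N.of_nat n) eqn:EE.
  - assert (n = 0%nat) by lia. subst. reflexivity.
  - simpl. assert (n = Pos.to_nat p) by lia. subst n. rewrite odd_pos.
    destruct p; simpl; lia.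
Qed.

Lemma d_ee t n : d (2*t) (2*n) = d t n.
Proof. unfold d. replace (2*n + 2*t)%nat with (2*(n+t))%nat by lia.
  rewrite !r_double. reflexivity. Qed.

Lemma d_eo t n : d (2*t) (2*n+1) = (d t n + oddz (n+t) - oddz n)%Z.
Proof. unfold d, oddz. replace (2*n+1 + 2*t)%nat with (2*(n+t)+1)%nat by lia.
  rewrite !r_sdouble. destruct (Nat.odd (n+t)), (Nat.odd n); lia. Qed.

Lemma d_oe t n : d (2*t+1) (2*n) = (d t n + oddz (n+t))%Z.
Proof. unfold d, oddz. replace (2*n + (2*t+1))%nat with (2*(n+t)+1)%nat by lia.
  rewrite r_sdouble, r_double. destruct (Nat.odd (n+t)); lia. Qed.

Lemma d_oo t n : d (2*t+1) (2*n+1) = (d (t+1) n - oddz n)%Z.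
Proof. unfold d, oddz. replace (2*n+1 + (2*t+1))%nat with (2*(n+(t+1)))%nat by lia.
  rewrite r_sdouble, r_double. destruct (Nat.odd n); lia. Qed.

Lemma oddz_2m m : oddz (2*m) = 0%Z.
Proof. unfold oddz. rewrite Nat.odd_even. reflexivity. Qed.
Lemma oddz_2m1 m : oddz (2*m+1) = 1%Z.
Proof. unfold oddz. rewrite Nat.odd_odd. reflexivity. Qed.
Lemma oddz_2mu m u : oddz (2*m+u) = oddz u.
Proof. unfold oddz. rewrite Nat.add_comm, Nat.odd_add_mul_2. reflexivity. Qed.
Lemma oddz_2m1u m u : oddz (2*m+1+u) = (1 - oddz u)%Z.
Proof. unfold oddz. replace (2*m+1+u)%nat with (S u + 2*m)%nat by lia.
  rewrite Nat.odd_add_mul_2, Nat.odd_succ, <- Nat.negb_odd. destruct (Nat.odd u); reflexivity. Qed.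

Definition EE (t : nat) (n : nat) : Z := d t (2*n).
Definition OO (t : nat) (n : nat) : Z := d t (2*n+1).

Lemma E2_e t m : EE (2*t) (2*m) = EE t m.
Proof. unfold EE. apply d_ee. Qed.
Lemma E2_o t m : EE (2*t) (2*m+1) = OO t m.
Proof. unfold EE, OO. replace (2*(2*m+1))%nat with (2*(2*m+1))%nat by lia. apply d_ee. Qed.
Lemma O2_e t m : OO (2*t) (2*m) = (EE t m + oddz t)%Z.
Proof. unfold EE, OO. rewrite d_eo, oddz_2mu, oddz_2m. lia. Qed.
Lemma O2_o t m : OO (2*t) (2*m+1) = (OO t m - oddz t)%Z.
Proof. unfold EE, OO. rewrite d_eo, oddz_2m1u, oddz_2m1. lia. Qed.
Lemma E1_e t m : EE (2*t+1) (2*m) = (EE t m + oddz t)%Z.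
Proof. unfold EE, OO. rewrite d_oe, oddz_2mu. lia. Qed.
Lemma E1_o t m : EE (2*t+1) (2*m+1) = (OO t m + (1 - oddz t))%Z.
Proof. unfold EE, OO. rewrite d_oe, oddz_2m1u. lia. Qed.
Lemma O1_e t m : OO (2*t+1) (2*m) = EE (t+1) m.
Proof. unfold EE, OO. rewrite d_oo, oddz_2m. lia. Qed.
Lemma O1_o t m : OO (2*t+1) (2*m+1) = (OO (t+1) m - 1)%Z.
Proof. unfold EE, OO. rewrite d_oo, oddz_2m1. lia. Qed.
Lemma d_E t m : d t (2*m) = EE t m.
Proof. reflexivity. Qed.
Lemma d_O t m : d t (2*m+1) = OO t m.
Proof. reflexivity. Qed.
Lemma d0 n : d 0 n = 0%Z.
Proof. unfold d. rewrite Nat.add_0_r. lia. Qed.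

Definition cnt (p : nat -> bool) (N : nat) : nat := length (filter p (seq 0 N)).

Lemma cnt_S p N : cnt p (S N) = (cnt p N + if p N then 1 else 0)%nat.
Proof.
  unfold cnt. rewrite seq_S, filter_app, length_app. simpl.
  destruct (p N); simpl; lia.
Qed.

Lemma cnt_le p N : (cnt p N <= N)%nat.
Proof. induction N; [unfold cnt; simpl; lia|]. rewrite cnt_S. destruct (p N); lia. Qed.

Lemma cnt_mono p N M : (N <= M)%nat -> (cnt p N <= cnt p M)%nat.
Proof. induction 1; [lia|]. rewrite cnt_S. destruct (p m); lia. Qed.

Lemma cnt_neg p N : (cnt p N + cnt (fun n => negb (p n)) N = N)%nat.
Proof. induction N; [reflexivity|]. rewrite !cnt_S. destruct (p N); simpl; lia. Qed.

Lemma cnt_all p N : (forall n, p n = true) -> cnt p N = N.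
Proof. intros H. induction N; [reflexivity|]. rewrite cnt_S, H. lia. Qed.

Lemma cnt_inter p q1 q2 N :
  (forall m, p (2*m)%nat = q1 m) -> (forall m, p (2*m+1)%nat = q2 m) ->
  cnt p (2*N) = (cnt q1 N + cnt q2 N)%nat.
Proof.
  intros H1 H2. induction N; [reflexivity|].
  replace (2 * S N)%nat with (S (S (2*N))) by lia.
  rewrite !cnt_S, IHN. replace (S (2*N)) with (2*N+1)%nat by lia.
  rewrite H1, H2. destruct (q1 N), (q2 N); lia.
Qed.

Definition LB (p : nat -> bool) (L : R) : Prop :=
  forall eps, 0 < eps -> exists N0, forall N, (N0 <= N)%nat -> INR N * (L - eps) <= INR (cnt p N).

Definition dens (p : nat -> bool) (L : R) : Prop :=
  is_lim_seq (fun N => INR (cnt p N) / INR N) L.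

Definition negp (p : nat -> bool) := fun n => negb (p n).

Lemma LB_0 p : LB p 0.
Proof. intros eps He. exists 0%nat. intros N _. pose proof (pos_INR N). pose proof (pos_INR (cnt p N)). nra. Qed.

Lemma LB_approx p L : (forall eps, 0 < eps -> exists L', LB p L' /\ L - eps <= L') -> LB p L.
Proof.
  intros H eps He. destruct (H (eps/2)) as [L' [HL' Hle]]; [lra|].
  destruct (HL' (eps/2)) as [N0 HN]; [lra|]. exists N0. intros N HN0.
  specialize (HN N HN0). pose proof (pos_INR N).
  assert (INR N * (L - eps) <= INR N * (L' - eps/2)) by (apply Rmult_le_compat_l; lra). lra.
Qed.

Lemma LB_le p L L' : LB p L -> L' <= L -> LB p L'.
Proof. intros H Hle. apply LB_approx. intros eps He. exists L. split; [auto|lra]. Qed.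

Lemma LB_dens p L : LB p L -> LB (negp p) (1 - L) -> dens p L.
Proof.
  intros H1 H2. unfold dens. apply is_lim_seq_spec. intros [eps He]. simpl.
  destruct (H1 (eps/2)) as [N1 HN1]; [lra|].
  destruct (H2 (eps/2)) as [N2 HN2]; [lra|].
  exists (S (N1 + N2)). intros N HN.
  specialize (HN1 N ltac:(lia)). specialize (HN2 N ltac:(lia)).
  pose proof (cnt_neg p N) as Hc. unfold negp in HN2.
  apply (f_equal INR) in Hc. rewrite plus_INR in Hc.
  assert (HNp : 0 < INR N) by (apply lt_0_INR; lia).
  replace (INR (cnt p N) / INR N - L) with ((INR (cnt p N) - INR N * L) / INR N) by (field; lra).
  rewrite Rabs_div by lra. rewrite (Rabs_right (INR N)) by lra.
  apply (Rmult_lt_reg_r (INR N)); [auto|]. unfold Rdiv. rewrite Rmult_assoc, Rinv_l, Rmult_1_r by lra.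
  apply Rabs_def1; nra.
Qed.

Lemma dens_LB p L : dens p L -> LB p L /\ LB (negp p) (1 - L).
Proof.
  intros H. unfold dens in H. apply is_lim_seq_spec in H.
  split; intros eps He; destruct (H (mkposreal eps He)) as [N0 HN0]; simpl in HN0;
    exists (S N0); intros N HN; specialize (HN0 N ltac:(lia));
    assert (HNp : 0 < INR N) by (apply lt_0_INR; lia);
    apply Rabs_def2 in HN0; destruct HN0 as [Ha Hb].
  - apply (Rmult_lt_compat_l (INR N)) in Hb; [|auto].
    field_simplify in Hb; lra.
  - pose proof (cnt_neg p N) as Hc. unfold negp.
    apply (f_equal INR) in Hc. rewrite plus_INR in Hc.
    apply (Rmult_lt_compat_l (INR N)) in Ha; [|auto].
    field_simplify in Ha; lra.
Qed.

Lemma LB_step p q1 q2 a b :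
  (forall N, (cnt q1 N + cnt q2 N <= cnt p (2*N))%nat) ->
  LB q1 a -> LB q2 b -> LB p ((a+b)/2).
Proof.
  intros Hc H1 H2 eps He.
  destruct (H1 (eps/2)) as [N1 HN1]; [lra|].
  destruct (H2 (eps/2)) as [N2 HN2]; [lra|].
  destruct (INR_unbounded (Rabs (a+b) / eps)) as [N3 HN3].
  exists (2 * (N1 + N2 + N3))%nat. intros M HM.
  set (N := (M/2)%nat).
  assert (HNM : (2*N <= M <= 2*N+1)%nat).
  { pose proof (Nat.div_mod M 2). pose proof (Nat.mod_upper_bound M 2). unfold N; lia. }
  assert (HN : (N1 + N2 + N3 <= N)%nat).
  { pose proof (Nat.div_mod M 2). pose proof (Nat.mod_upper_bound M 2). unfold N; lia. }
  specialize (HN1 N ltac:(lia)). specialize (HN2 N ltac:(lia)).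
  pose proof (cnt_mono p (2*N) M ltac:(lia)) as Hm.
  pose proof (Hc N) as Hc'.
  apply le_INR in Hm. apply le_INR in Hc'. rewrite plus_INR in Hc'.
  assert (HMr : INR M <= 2 * INR N + 1).
  { replace 2 with (INR 2) by reflexivity. rewrite <- mult_INR, <- S_INR. apply le_INR. lia. }
  assert (HN3' : INR N3 <= INR N) by (apply le_INR; lia).
  assert (HX : Rabs (a+b) <= INR N * eps).
  { apply Rlt_le. apply (Rmult_lt_reg_r (/eps)). apply Rinv_0_lt_compat; lra.
    rewrite Rmult_assoc, Rinv_r, Rmult_1_r by lra. unfold Rdiv in HN3. lra. }
  pose proof (pos_INR M). pose proof (pos_INR (cnt p M)).
  destruct (Rle_dec 0 ((a+b)/2 - eps)) as [HX0|HX0].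
  - assert (INR M * ((a+b)/2 - eps) <= (2 * INR N + 1) * ((a+b)/2 - eps))
      by (apply Rmult_le_compat_r; lra).
    pose proof (Rle_abs (a+b)). nra.
  - assert (INR M * ((a+b)/2 - eps) <= 0) by nra. lra.
Qed.

Lemma ex_scal (a : R) (g : nat -> R) : ex_series g -> ex_series (fun n => a * g n).
Proof. intros H. exact (@ex_series_scal_l R_AbsRing R_NormedModule a g H). Qed.

Lemma exle (a b : nat -> R) : (forall n, Rabs (a n) <= b n) -> ex_series b -> ex_series a.
Proof. intros H1 H2. exact (@ex_series_le R_AbsRing R_CompleteNormedModule a b H1 H2). Qed.

Lemma half_pow_le1 n : (1/2)^n <= 1.
Proof. induction n; simpl; [lra|]. pose proof (pow_le (1/2) n ltac:(lra)). lra. Qed.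

Lemma half_pow_mono a b : (b <= a)%nat -> (1/2)^a <= (1/2)^b.
Proof. intros H. replace a with (b + (a - b))%nat by lia. rewrite pow_add.
  pose proof (half_pow_le1 (a-b)). pose proof (pow_le (1/2) b ltac:(lra)). nra. Qed.

Lemma poly_bound5 n : 1 + INR (n+5) ^ 2 <= 4 * (3/2)^(n+5).
Proof.
  induction n.
  - simpl. lra.
  - replace (S n + 5)%nat with (S (n+5)) by lia. rewrite S_INR. simpl pow at 2.
    assert (5 <= INR (n+5)) by (replace 5 with (INR 5) by (simpl; lra); apply le_INR; lia).
    simpl pow in IHn |- *. nra.
Qed.

Lemma poly_bound n : 1 + INR n ^ 2 <= 4 * (3/2)^n.
Proof.
  destruct (le_lt_dec 5 n).
  - replace n with ((n-5)+5)%nat by lia. apply poly_bound5.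
  - destruct n as [|[|[|[|[|n]]]]]; try lia; simpl; lra.
Qed.

Lemma ex_poly : ex_series (fun n => (1 + INR n ^ 2) * (1/2)^n).
Proof.
  apply exle with (fun n => 4 * (3/4)^n).
  - intros n. rewrite Rabs_right.
    + pose proof (poly_bound n). replace ((3/4)^n) with ((3/2)^n * (1/2)^n)
        by (rewrite <- Rpow_mult_distr; f_equal; lra).
      pose proof (pow_le (1/2) n ltac:(lra)). nra.
    + apply Rle_ge, Rmult_le_pos; [pose proof (pow2_ge_0 (INR n)); lra| apply pow_le; lra].
  - apply ex_scal. apply ex_series_geom. rewrite Rabs_right; lra.
Qed.

Definition Good (f : Z -> R) : Prop := exists C, forall k, Rabs (f k) <= C * (1/2)^(Z.abs_nat k).

Definition AbsZ (g : Z -> R) : Prop :=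
  ex_series (fun n => Rabs (g (Z.of_nat n))) /\ ex_series (fun n => Rabs (g (- Z.of_nat (S n))%Z)).

Lemma AbsZ_bound g C : (forall k, Rabs (g k) <= C * ((1 + IZR k ^ 2) * (1/2)^(Z.abs_nat k))) -> AbsZ g.
Proof.
  intros H. split.
  - apply exle with (fun n => C * ((1 + INR n ^ 2) * (1/2)^n)).
    + intros n. rewrite Rabs_Rabsolu.
      specialize (H (Z.of_nat n)). rewrite Zabs2Nat.id, <- INR_IZR_INZ in H. auto.
    + apply ex_scal, ex_poly.
  - apply exle with (fun n => C * ((1 + INR (S n) ^ 2) * (1/2)^(S n))).
    + intros n. rewrite Rabs_Rabsolu.
      specialize (H (- Z.of_nat (S n))%Z).
      replace (Z.abs_nat (- Z.of_nat (S n))) with (S n) in H by lia.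
      rewrite opp_IZR, <- INR_IZR_INZ in H. replace ((- INR (S n))^2) with (INR (S n)^2) in H by ring. auto.
    + apply ex_scal. apply (ex_series_incr_1 (fun n => (1 + INR n ^ 2) * (1/2)^n)). apply ex_poly.
Qed.

Lemma Good_AbsZ f P A : Good f -> (forall k, Rabs (P k) <= A * (1 + IZR k ^ 2)) ->
  AbsZ (fun k => P k * f k).
Proof.
  intros [C HC] HP. apply AbsZ_bound with (A * C). intros k.
  rewrite Rabs_mult. specialize (HP k). specialize (HC k).
  pose proof (Rabs_pos (P k)). pose proof (Rabs_pos (f k)).
  pose proof (pow_le (1/2) (Z.abs_nat k) ltac:(lra)).
  pose proof (pow2_ge_0 (IZR k)).
  assert (Rabs (P k) * Rabs (f k) <= A * (1 + IZR k ^ 2) * Rabs (f k)) by (apply Rmult_le_compat_r; auto).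
  assert (A * (1 + IZR k ^ 2) * Rabs (f k) <= A * (1 + IZR k ^ 2) * (C * (1/2)^(Z.abs_nat k))).
  { apply Rmult_le_compat_l; auto. apply Rmult_le_pos; [|lra].
    apply Rle_trans with (Rabs (P k) / (1 + IZR k ^ 2)). apply Rdiv_le_0_compat; lra.
    apply Rmult_le_reg_r with (1 + IZR k ^2); [lra|]. field_simplify; lra. }
  nra.
Qed.

Definition T (g : Z -> R) : R :=
  Series (fun n => g (Z.of_nat n)) + Series (fun n => g (- Z.of_nat (S n))%Z).

Lemma T_ext g h : (forall k, g k = h k) -> T g = T h.
Proof. intros H. unfold T. f_equal; apply Series_ext; auto. Qed.

Lemma AbsZ_ex g : AbsZ g -> ex_series (fun n => g (Z.of_nat n)) /\ ex_series (fun n => g (- Z.of_nat (S n))%Z).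
Proof. intros [H1 H2]. split; apply ex_series_Rabs; auto. Qed.

Lemma T_lin g1 g2 a b : AbsZ g1 -> AbsZ g2 -> T (fun k => a * g1 k + b * g2 k) = a * T g1 + b * T g2.
Proof.
  intros H1 H2. apply AbsZ_ex in H1 as [A1 B1]. apply AbsZ_ex in H2 as [A2 B2].
  unfold T. rewrite !Series_plus by (apply ex_scal; auto). rewrite !Series_scal_l. ring.
Qed.

Lemma T_shift g : AbsZ g -> T (fun k => g (k+1)%Z) = T g.
Proof.
  intros H. apply AbsZ_ex in H as [A B]. unfold T.
  rewrite (Series_incr_1 (fun n => g (Z.of_nat n))) by auto.
  assert (B' : ex_series (fun n => g (- Z.of_nat n)%Z)).
  { apply ex_series_incr_1. auto. }
  rewrite (Series_ext (fun n => g (- Z.of_nat (S n) + 1)%Z) (fun n => g (- Z.of_nat n)%Z))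
    by (intros; f_equal; lia).
  rewrite (Series_incr_1 (fun n => g (- Z.of_nat n)%Z)) by auto.
  rewrite (Series_ext (fun n => g (Z.of_nat n + 1)%Z) (fun k => g (Z.of_nat (S k))))
    by (intros; f_equal; lia).
  simpl. ring.
Qed.

Lemma Zsum_of_T g : AbsZ g -> Zsum_abs g (T g).
Proof.
  intros H. pose proof (AbsZ_ex g H) as [A B]. destruct H as [HA HB]. split.
  - apply (ex_series_plus (fun n => Rabs (g (Z.of_nat n))) (fun n => Rabs (g (- Z.of_nat n)%Z))); auto.
    apply ex_series_incr_1. auto.
  - apply is_series_decr_1.
    match goal with |- is_series _ ?l => replace l with
      (Series (fun n => g (Z.of_nat (S n))) + Series (fun n => g (- Z.of_nat (S n))%Z)) end.
    2:{ unfold T. rewrite (Series_incr_1 (fun n => g (Z.of_nat n))) by auto. simpl.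
      change (plus ?x ?y) with (x + y). change (opp ?x) with (- x). ring. }
    apply is_series_ext with (fun n => plus (g (Z.of_nat (S n))) (g (- Z.of_nat (S n))%Z)).
    { intros; reflexivity. }
    apply (@is_series_plus R_AbsRing R_NormedModule); apply Series_correct; auto.
    apply ex_series_incr_1 with (a := fun n => g (Z.of_nat n)). auto.
Qed.

Definition mom (f : Z -> R) (m : nat) : R := T (fun k => IZR k ^ m * f k).

Lemma mom_ext f g m : (forall k, f k = g k) -> mom f m = mom g m.
Proof. intros H. unfold mom. apply T_ext. intros k. rewrite H. auto. Qed.

Lemma AbsZ_ext g h : (forall k, g k = h k) -> AbsZ g -> AbsZ h.
Proof. intros H [A B]. split.
  - apply ex_series_ext with (fun n => Rabs (g (Z.of_nat n))); auto. intros; rewrite H; auto.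
  - apply ex_series_ext with (fun n => Rabs (g (- Z.of_nat (S n))%Z)); auto. intros; rewrite H; auto. Qed.

Lemma abs_le_sq x : Rabs x <= 1 + x^2.
Proof. destruct (Rle_dec 0 x); [rewrite Rabs_right by lra|rewrite Rabs_left by lra]; nra. Qed.

Lemma polyb m x : (m <= 2)%nat -> Rabs (x^m) <= 1 * (1 + x^2).
Proof.
  intros H. destruct m as [|[|[|m]]]; try lia; simpl.
  - rewrite Rabs_R1. pose proof (pow2_ge_0 x). lra.
  - rewrite Rmult_1_r. pose proof (abs_le_sq x). lra.
  - rewrite Rmult_1_r, Rabs_right by nra. lra.
Qed.

Lemma polyb_shift m x : (m <= 2)%nat -> Rabs ((x - 1)^m) <= 3 * (1 + x^2).
Proof.
  intros H. destruct m as [|[|[|m]]]; try lia; simpl.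
  - rewrite Rabs_R1. pose proof (pow2_ge_0 x). lra.
  - rewrite Rmult_1_r. destruct (Rle_dec 0 (x-1)); [rewrite Rabs_right by lra|rewrite Rabs_left by lra]; nra.
  - pose proof (pow2_ge_0 (x+1)). pose proof (pow2_ge_0 (x-1)). simpl in *.
    rewrite Rabs_right by lra. nra.
Qed.

Lemma mom_AbsZ f m : Good f -> (m <= 2)%nat -> AbsZ (fun k => IZR k ^ m * f k).
Proof. intros G H. apply Good_AbsZ with 1; auto. intros; apply polyb; auto. Qed.

Lemma mom_shift1 f : Good f ->
  mom (fun k => f (k+1)%Z) 0 = mom f 0 /\
  mom (fun k => f (k+1)%Z) 1 = mom f 1 - mom f 0 /\
  mom (fun k => f (k+1)%Z) 2 = mom f 2 - 2 * mom f 1 + mom f 0.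
Proof.
  intros G.
  assert (Hs : forall m, (m <= 2)%nat -> mom (fun k => f (k+1)%Z) m = T (fun j => (IZR j - 1)^m * f j)).
  { intros m Hm. unfold mom. rewrite <- (T_shift (fun j => (IZR j - 1)^m * f j)).
    - apply T_ext. intros k. rewrite plus_IZR. f_equal. f_equal. ring.
    - apply Good_AbsZ with 3; auto. intros; apply polyb_shift; auto. }
  pose proof (mom_AbsZ f 0 G ltac:(lia)) as A0.
  pose proof (mom_AbsZ f 1 G ltac:(lia)) as A1.
  pose proof (mom_AbsZ f 2 G ltac:(lia)) as A2.
  split; [|split].
  - rewrite Hs by lia. unfold mom. apply T_ext. intros; simpl; ring.
  - rewrite Hs by lia. unfold mom.
    rewrite (T_ext _ (fun j => 1 * (IZR j ^ 1 * f j) + (-1) * (IZR j ^ 0 * f j))) by (intros; simpl; ring).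
    rewrite T_lin by auto. ring.
  - rewrite Hs by lia. unfold mom.
    rewrite (T_ext _ (fun j => 1 * (IZR j ^ 2 * f j) + 1 * ((-2) * (IZR j ^ 1 * f j) + 1 * (IZR j ^ 0 * f j))))
      by (intros; simpl; ring).
    rewrite T_lin; auto.
    + rewrite T_lin by auto. ring.
    + apply AbsZ_ext with (fun j => (-2 * IZR j + 1) * f j). intros; simpl; ring.
      apply Good_AbsZ with 3; auto. intros k.
      pose proof (pow2_ge_0 (IZR k - 1)). pose proof (pow2_ge_0 (IZR k + 1)).
      destruct (Rle_dec 0 (-2 * IZR k + 1)); [rewrite Rabs_right by lra|rewrite Rabs_left by lra]; nra.
Qed.

Lemma Good_shift f s : (s = -1 \/ s = 0 \/ s = 1)%Z -> Good f -> Good (fun k => f (k - s)%Z).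
Proof.
  intros Hs [C HC]. exists (2 * C). intros k. specialize (HC (k - s)%Z).
  assert (Hab : (Z.abs_nat k <= S (Z.abs_nat (k - s)))%nat) by lia.
  pose proof (half_pow_mono _ _ Hab). simpl in H.
  assert (0 <= C). { pose proof (Rabs_pos (f (k-s)%Z)). pose proof (pow_lt (1/2) (Z.abs_nat (k-s)) ltac:(lra)).
    destruct (Rle_dec 0 C); auto. nra. }
  nra.
Qed.

Lemma mom_shift f s : (s = -1 \/ s = 0 \/ s = 1)%Z -> Good f ->
  mom (fun k => f (k - s)%Z) 0 = mom f 0 /\
  mom (fun k => f (k - s)%Z) 1 = mom f 1 + IZR s * mom f 0 /\
  mom (fun k => f (k - s)%Z) 2 = mom f 2 + 2 * IZR s * mom f 1 + IZR s ^ 2 * mom f 0.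
Proof.
  intros Hs G. destruct Hs as [ -> | [ -> | -> ] ].
  - pose proof (mom_shift1 f G) as [H0 [H1 H2]].
    assert (E : forall m, mom (fun k => f (k - -1)%Z) m = mom (fun k => f (k+1)%Z) m).
    { intros m. apply mom_ext. intros; f_equal; lia. }
    rewrite (E 0%nat), (E 1%nat), (E 2%nat), H0, H1, H2. simpl. repeat split; ring.
  - assert (E : forall m, mom (fun k => f (k - 0)%Z) m = mom f m).
    { intros m. apply mom_ext. intros; f_equal; lia. }
    rewrite (E 0%nat), (E 1%nat), (E 2%nat). simpl. repeat split; ring.
  - set (g := fun k => f (k - 1)%Z).
    assert (Gg : Good g) by (apply Good_shift; auto).
    pose proof (mom_shift1 g Gg) as [H0 [H1 H2]].
    assert (E : forall m, mom (fun k => g (k+1)%Z) m = mom f m).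
    { intros m. unfold mom, g. apply T_ext. intros k. do 2 f_equal. lia. }
    rewrite (E 0%nat), (E 1%nat), (E 2%nat) in *. fold g. simpl. repeat split; lra.
Qed.

Lemma Good_comb f1 f2 : Good f1 -> Good f2 -> Good (fun k => (f1 k + f2 k) / 2).
Proof.
  intros [C1 H1] [C2 H2]. exists ((C1 + C2)/2). intros k. specialize (H1 k). specialize (H2 k).
  unfold Rdiv. rewrite Rabs_mult, (Rabs_right (/2)) by lra.
  pose proof (Rabs_triang (f1 k) (f2 k)). nra.
Qed.

Lemma mom_comb f1 f2 m : Good f1 -> Good f2 -> (m <= 2)%nat ->
  mom (fun k => (f1 k + f2 k) / 2) m = (mom f1 m + mom f2 m) / 2.
Proof.
  intros G1 G2 Hm. unfold mom.
  rewrite (T_ext _ (fun k => (1/2) * (IZR k ^ m * f1 k) + (1/2) * (IZR k ^ m * f2 k))) by (intros; field).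
  rewrite T_lin by (apply mom_AbsZ; auto). field.
Qed.

Definition Comb (f1 : Z -> R) (s1 : Z) (f2 : Z -> R) (s2 : Z) : Z -> R :=
  fun k => (f1 (k - s1)%Z + f2 (k - s2)%Z) / 2.

Lemma Comb_props f1 s1 f2 s2 : (s1 = -1 \/ s1 = 0 \/ s1 = 1)%Z -> (s2 = -1 \/ s2 = 0 \/ s2 = 1)%Z ->
  Good f1 -> Good f2 ->
  Good (Comb f1 s1 f2 s2) /\
  mom (Comb f1 s1 f2 s2) 0 = (mom f1 0 + mom f2 0) / 2 /\
  mom (Comb f1 s1 f2 s2) 1 = (mom f1 1 + IZR s1 * mom f1 0 + mom f2 1 + IZR s2 * mom f2 0) / 2 /\
  mom (Comb f1 s1 f2 s2) 2 = (mom f1 2 + 2 * IZR s1 * mom f1 1 + IZR s1 ^ 2 * mom f1 0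
                             + mom f2 2 + 2 * IZR s2 * mom f2 1 + IZR s2 ^ 2 * mom f2 0) / 2.
Proof.
  intros Hs1 Hs2 G1 G2.
  pose proof (Good_shift f1 s1 Hs1 G1) as G1'. pose proof (Good_shift f2 s2 Hs2 G2) as G2'.
  pose proof (mom_shift f1 s1 Hs1 G1) as [A0 [A1 A2]].
  pose proof (mom_shift f2 s2 Hs2 G2) as [B0 [B1 B2]].
  unfold Comb. split; [apply Good_comb; auto|].
  rewrite !mom_comb by (auto; lia). rewrite A0, A1, A2, B0, B1, B2. repeat split; lra.
Qed.

Definition delta0 (k : Z) : R := if Z.eqb k 0 then 1 else 0.

Lemma Good_delta0 : Good delta0.
Proof. exists 1. intros k. unfold delta0. destruct (Z.eqb_spec k 0) as [->|].
  - simpl. rewrite Rabs_R1. lra.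
  - rewrite Rabs_R0. pose proof (pow_le (1/2) (Z.abs_nat k) ltac:(lra)). lra. Qed.

Lemma Series_zero (a : nat -> R) : (forall n, a n = 0) -> Series a = 0.
Proof. intros H. rewrite (Series_ext a (fun n => 0 * 0)) by (intros; rewrite H; ring).
  rewrite Series_scal_l. ring. Qed.

Lemma mom_delta0 m : (m <= 2)%nat -> mom delta0 m = 0 ^ m.
Proof.
  intros Hm. pose proof (AbsZ_ex _ (mom_AbsZ delta0 m Good_delta0 Hm)) as [A B].
  unfold mom, T. rewrite Series_incr_1 by auto.
  rewrite (Series_zero (fun k => IZR (Z.of_nat (S k)) ^ m * delta0 (Z.of_nat (S k)))).
  rewrite (Series_zero (fun n => IZR (- Z.of_nat (S n))%Z ^ m * delta0 (- Z.of_nat (S n))%Z)).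
  - unfold delta0. simpl. ring.
  - intros n. unfold delta0. destruct (Z.eqb_spec (- Z.of_nat (S n)) 0); [lia|ring].
  - intros n. unfold delta0. destruct (Z.eqb_spec (Z.of_nat (S n)) 0); [lia|ring].
Qed.

Definition DistOf (g : nat -> Z) (f : Z -> R) : Prop :=
  forall k, dens (fun n => Z.eqb (g n) k) (f k).

Lemma LB_all p : (forall n, p n = true) -> LB p 1.
Proof.
  intros H eps He. exists 0%nat. intros N _. rewrite cnt_all by auto.
  pose proof (pos_INR N). nra.
Qed.

Lemma dens_inter p q1 q2 a b :
  (forall m, p (2*m)%nat = q1 m) -> (forall m, p (2*m+1)%nat = q2 m) ->
  dens q1 a -> dens q2 b -> dens p ((a+b)/2).
Proof.
  intros H1 H2 D1 D2. apply dens_LB in D1 as [A1 B1]. apply dens_LB in D2 as [A2 B2].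
  apply LB_dens.
  - apply (LB_step p q1 q2); auto. intros N. rewrite (cnt_inter p q1 q2 N H1 H2). lia.
  - eapply LB_le. apply (LB_step (negp p) (negp q1) (negp q2)); eauto.
    intros N. rewrite (cnt_inter (negp p) (negp q1) (negp q2) N). lia.
    intros m; unfold negp; rewrite H1; auto. intros m; unfold negp; rewrite H2; auto.
    lra.
Qed.

Lemma DistOf_ext g f f' : (forall k, f k = f' k) -> DistOf g f -> DistOf g f'.
Proof. intros H D k. rewrite <- H. apply D. Qed.

Lemma DistOf_inter g g1 g2 (s1 s2 : Z) f1 f2 :
  (forall m, g (2*m)%nat = (g1 m + s1)%Z) -> (forall m, g (2*m+1)%nat = (g2 m + s2)%Z) ->
  DistOf g1 f1 -> DistOf g2 f2 ->
  DistOf g (fun k => (f1 (k - s1)%Z + f2 (k - s2)%Z) / 2).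
Proof.
  intros H1 H2 D1 D2 k. apply dens_inter with (q1 := fun n => Z.eqb (g1 n) (k - s1))
    (q2 := fun n => Z.eqb (g2 n) (k - s2)); auto.
  - intros m. rewrite H1. destruct (Z.eqb_spec (g1 m + s1) k), (Z.eqb_spec (g1 m) (k - s1)); auto; lia.
  - intros m. rewrite H2. destruct (Z.eqb_spec (g2 m + s2) k), (Z.eqb_spec (g2 m) (k - s2)); auto; lia.
Qed.


Lemma DistOf_zero g : (forall n, g n = 0%Z) -> DistOf g delta0.
Proof.
  intros H k. unfold delta0. destruct (Z.eqb_spec k 0) as [->|Hk].
  - apply LB_dens. apply LB_all. intros n. rewrite H. reflexivity.
    eapply LB_le. apply LB_0. lra.
  - apply LB_dens. apply LB_0. eapply LB_le. apply LB_all. intros n. unfold negp.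
    rewrite H. destruct (Z.eqb_spec 0 k); auto; lia. lra.
Qed.

Fixpoint Sser (al : Z -> R) (I : nat) (k : Z) : R :=
  match I with O => 0 | S I' => (al k + Sser al I' (k+1)%Z) / 2 end.

Lemma unroll (P Q : Z -> nat -> bool) al :
  (forall k N, (cnt (Q k) N + cnt (P (k+1)%Z) N <= cnt (P k) (2*N))%nat) ->
  (forall k, LB (Q k) (al k)) -> forall I k, LB (P k) (Sser al I k).
Proof.
  intros Hc HQ I. induction I; intros k; simpl.
  - apply LB_0.
  - apply LB_step with (q1 := Q k) (q2 := P (k+1)%Z); auto.
Qed.

Lemma Sser_close al be B : (forall k, be k = (al k + be (k+1)%Z)/2) -> (forall k, Rabs (be k) <= B) ->
  forall I k, Rabs (Sser al I k - be k) <= B * (1/2)^I.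
Proof.
  intros Hf Hb I. induction I; intros k; simpl.
  - rewrite Rmult_1_r. replace (0 - be k) with (- be k) by ring. rewrite Rabs_Ropp. auto.
  - rewrite (Hf k). replace ((al k + Sser al I (k + 1)) / 2 - (al k + be (k + 1)%Z) / 2)
      with ((Sser al I (k+1) - be (k+1)%Z) / 2) by field.
    rewrite Rabs_div by lra. rewrite (Rabs_right 2) by lra.
    specialize (IHI (k+1)%Z). lra.
Qed.

Lemma unroll_lim (P Q : Z -> nat -> bool) al be B :
  (forall k N, (cnt (Q k) N + cnt (P (k+1)%Z) N <= cnt (P k) (2*N))%nat) ->
  (forall k, LB (Q k) (al k)) ->
  (forall k, be k = (al k + be (k+1)%Z)/2) -> (forall k, Rabs (be k) <= B) ->
  forall k, LB (P k) (be k).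
Proof.
  intros Hc HQ Hf Hb k. apply LB_approx. intros eps He.
  assert (HB : 0 <= B) by (specialize (Hb 0%Z); pose proof (Rabs_pos (be 0%Z)); lra).
  destruct (pow_lt_1_zero (1/2) ltac:(rewrite Rabs_right; lra) (eps / (B+1))) as [I HI].
  { apply Rdiv_lt_0_compat; lra. }
  specialize (HI I (le_n I)). rewrite Rabs_right in HI by (apply Rle_ge, pow_le; lra).
  exists (Sser al I k). split. apply unroll with Q; auto.
  pose proof (Sser_close al be B Hf Hb I k) as Hs.
  assert (Hp : 0 <= (1/2)^I) by (apply pow_le; lra).
  assert ((B+1) * (1/2)^I < eps).
  { apply (Rmult_lt_compat_l (B+1)) in HI; [|lra]. field_simplify in HI; lra. }
  apply Rabs_le_between in Hs. nra.
Qed.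

Definition e1 : Z -> R := Comb delta0 0 delta0 1.

Lemma DistOf_E0 : DistOf (EE 0) delta0.
Proof. apply DistOf_zero. intros n. unfold EE. apply d0. Qed.
Lemma DistOf_O0 : DistOf (OO 0) delta0.
Proof. apply DistOf_zero. intros n. unfold OO. apply d0. Qed.

Lemma DistOf_E1 : DistOf (EE 1) e1.
Proof.
  unfold e1, Comb. apply DistOf_inter with (g1 := EE 0) (g2 := OO 0).
  - intros m. exact (E1_e 0 m).
  - intros m. exact (E1_o 0 m).
  - apply DistOf_E0.
  - apply DistOf_O0.
Qed.

Lemma e1_props : Good e1 /\ mom e1 0 = 1 /\ mom e1 1 = 1/2 /\ mom e1 2 = 1/2.
Proof.
  pose proof (Comb_props delta0 0 delta0 1 ltac:(lia) ltac:(lia) Good_delta0 Good_delta0) as [G [H0 [H1 H2]]].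
  unfold e1. rewrite H0, H1, H2, !mom_delta0 by lia. simpl. repeat split; auto; lra.
Qed.

Definition o1 (k : Z) : R :=
  if Z.leb 2 k then 0 else if Z.eqb k 1 then 1/4 else 3/8 * (1/2)^(Z.to_nat (-k)).

Lemma o1_fix k : o1 k = (e1 k + o1 (k+1)%Z) / 2.
Proof.
  unfold o1, e1, Comb, delta0.
  destruct (Z.leb_spec 2 k); destruct (Z.leb_spec 2 (k+1)); destruct (Z.eqb_spec k 1);
  destruct (Z.eqb_spec (k+1) 1); destruct (Z.eqb_spec (k-0) 0); destruct (Z.eqb_spec (k-1) 0);
  try lia; try lra.
  - assert (k = 0%Z) by lia. subst. simpl. lra.
  - replace (Z.to_nat (-k)) with (S (Z.to_nat (- (k+1)))) by lia. simpl. lra.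
Qed.

Lemma o1_bounds k : 0 <= o1 k <= 1.
Proof.
  unfold o1. destruct (Z.leb 2 k); [lra|]. destruct (Z.eqb k 1); [lra|].
  pose proof (half_pow_le1 (Z.to_nat (-k))). pose proof (pow_le (1/2) (Z.to_nat (-k)) ltac:(lra)). lra.
Qed.

Lemma Good_o1 : Good o1.
Proof.
  exists 1. intros k. pose proof (o1_bounds k). rewrite Rabs_right by lra.
  pose proof (pow_le (1/2) (Z.abs_nat k) ltac:(lra)).
  unfold o1. destruct (Z.leb_spec 2 k); [lra|]. destruct (Z.eqb_spec k 1).
  - subst. simpl. lra.
  - replace (Z.to_nat (-k)) with (Z.abs_nat k) by lia. lra.
Qed.

Lemma o1_props : mom o1 0 = 1 /\ mom o1 1 = - (1/2) /\ mom o1 2 = 5/2.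
Proof.
  destruct e1_props as [Ge [E0 [E1 E2]]].
  pose proof (Comb_props e1 0 o1 (-1) ltac:(lia) ltac:(lia) Ge Good_o1) as [_ [H0 [H1 H2]]].
  assert (E : forall m, mom o1 m = mom (Comb e1 0 o1 (-1)) m).
  { intros m. apply mom_ext. intros k. unfold Comb. rewrite o1_fix. do 3 f_equal; lia. }
  rewrite <- !E in H0, H1, H2. rewrite E0, E1, E2 in *. simpl in *. 
  assert (mom o1 0 = 1) by lra. repeat split; lra.
Qed.

Lemma DistOf_O1 : DistOf (OO 1) o1.
Proof.
  pose proof DistOf_E1 as DE.
  assert (He : forall m, OO 1 (2*m) = EE 1 m) by (intros m; exact (O1_e 0 m)).
  assert (Ho : forall m, OO 1 (2*m+1) = (OO 1 m - 1)%Z) by (intros m; exact (O1_o 0 m)).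
  set (P := fun k n => Z.eqb (OO 1 n) k). set (Q := fun k n => Z.eqb (EE 1 n) k).
  assert (HPe : forall k m, P k (2*m)%nat = Q k m) by (intros; unfold P, Q; rewrite He; auto).
  assert (HPo : forall k m, P k (2*m+1)%nat = P (k+1)%Z m).
  { intros; unfold P; rewrite Ho. destruct (Z.eqb_spec (OO 1 m - 1) k), (Z.eqb_spec (OO 1 m) (k+1)); auto; lia. }
  intros k. apply LB_dens.
  - change (LB (P k) (o1 k)). apply unroll_lim with (Q := Q) (al := e1) (B := 1).
    + intros k' N. rewrite (cnt_inter (P k') (Q k') (P (k'+1)%Z) N); auto.
    + intros k'. apply (dens_LB _ _ (DE k')).
    + apply o1_fix.
    + intros k'. pose proof (o1_bounds k'). rewrite Rabs_right; lra.
  - change (LB ((fun k => negp (P k)) k) ((fun k => 1 - o1 k) k)).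
    apply unroll_lim with (Q := fun k => negp (Q k)) (al := fun k => 1 - e1 k) (B := 1).
    + intros k' N. rewrite (cnt_inter (negp (P k')) (negp (Q k')) (negp (P (k'+1)%Z)) N); auto.
      intros m; unfold negp; rewrite HPe; auto. intros m; unfold negp; rewrite HPo; auto.
    + intros k'. apply (dens_LB _ _ (DE k')).
    + intros k'. rewrite (o1_fix k'). lra.
    + intros k'. pose proof (o1_bounds k'). rewrite Rabs_right; lra.
Qed.

Definition hh (t : nat) : R := if Nat.odd t then 1/2 else 0.

Lemma oddz_cases u : (oddz u = 0 \/ oddz u = 1)%Z.
Proof. unfold oddz. destruct (Nat.odd u); auto. Qed.

Lemma hh_oddz u : hh u = IZR (oddz u) / 2.
Proof. unfold hh, oddz. destruct (Nat.odd u); simpl; lra. Qed.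

Lemma oddz_S u : oddz (u+1) = (1 - oddz u)%Z.
Proof. unfold oddz. rewrite Nat.add_1_r, Nat.odd_succ, <- Nat.negb_odd. destruct (Nat.odd u); reflexivity. Qed.

Definition Qp (v : nat -> R) (t : nat) : Prop :=
  exists e o, DistOf (EE t) e /\ DistOf (OO t) o /\ Good e /\ Good o /\
    mom e 0 = 1 /\ mom o 0 = 1 /\ mom e 1 = hh t /\ mom o 1 = - hh t /\
    (mom e 2 + mom o 2) / 2 = v t.

Lemma v_even (v : nat -> R) (hv0 : v 0%nat = 0) (hv1 : v 1%nat = 3 / 2) (hv4 : forall t : nat, v (4 * t)%nat = v (2 * t)%nat) (hv42 : forall t : nat, v (4 * t + 2)%nat = v (2 * t + 1)%nat + 1) (hv21 : forall t : nat, v (2 * t + 1)%nat = (v t + v (t + 1)%nat) / 2 + 3 / 4) u : v (2*u)%nat = v u + IZR (oddz u).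
Proof.
  unfold oddz. destruct (Nat.Even_or_Odd u) as [[w Hw]|[w Hw]]; subst u.
  - replace (2 * (2 * w))%nat with (4 * w)%nat by lia. rewrite hv4, Nat.odd_even. simpl. lra.
  - replace (2 * (2 * w + 1))%nat with (4 * w + 2)%nat by lia. rewrite hv42, Nat.odd_odd. simpl. lra.
Qed.

Lemma Q0 (v : nat -> R) (hv0 : v 0%nat = 0) (hv1 : v 1%nat = 3 / 2) (hv4 : forall t : nat, v (4 * t)%nat = v (2 * t)%nat) (hv42 : forall t : nat, v (4 * t + 2)%nat = v (2 * t + 1)%nat + 1) (hv21 : forall t : nat, v (2 * t + 1)%nat = (v t + v (t + 1)%nat) / 2 + 3 / 4) : Qp v 0.
Proof.
  exists delta0, delta0. repeat split; try apply DistOf_E0; try apply DistOf_O0; try apply Good_delta0;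
  rewrite ?mom_delta0 by lia; unfold hh; simpl; lra.
Qed.

Lemma Q1 (v : nat -> R) (hv0 : v 0%nat = 0) (hv1 : v 1%nat = 3 / 2) (hv4 : forall t : nat, v (4 * t)%nat = v (2 * t)%nat) (hv42 : forall t : nat, v (4 * t + 2)%nat = v (2 * t + 1)%nat + 1) (hv21 : forall t : nat, v (2 * t + 1)%nat = (v t + v (t + 1)%nat) / 2 + 3 / 4) : Qp v 1.
Proof.
  destruct e1_props as [Ge [E0 [E1 E2]]]. destruct o1_props as [O0 [O1 O2]].
  exists e1, o1. repeat split; auto using DistOf_E1, DistOf_O1, Good_o1; unfold hh; simpl; lra.
Qed.

Lemma Qeven (v : nat -> R) (hv0 : v 0%nat = 0) (hv1 : v 1%nat = 3 / 2) (hv4 : forall t : nat, v (4 * t)%nat = v (2 * t)%nat) (hv42 : forall t : nat, v (4 * t + 2)%nat = v (2 * t + 1)%nat + 1) (hv21 : forall t : nat, v (2 * t + 1)%nat = (v t + v (t + 1)%nat) / 2 + 3 / 4) u : Qp v u -> Qp v (2*u).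
Proof.
  intros [e [o [De [Do [Ge [Go [E0 [O0 [E1 [O1 E2]]]]]]]]]].
  pose proof (oddz_cases u) as Ha. pose proof (hh_oddz u) as Hh. pose proof (v_even v hv0 hv1 hv4 hv42 hv21 u) as Hv.
  set (a := oddz u) in *.
  assert (Ha' : (a = -1 \/ a = 0 \/ a = 1)%Z) by lia.
  assert (Hna : (- a = -1 \/ - a = 0 \/ - a = 1)%Z) by lia.
  pose proof (Comb_props e 0 o 0 ltac:(lia) ltac:(lia) Ge Go) as [G1 [A0 [A1 A2]]].
  pose proof (Comb_props e a o (-a) Ha' Hna Ge Go) as [G2 [B0 [B1 B2]]].
  exists (Comb e 0 o 0), (Comb e a o (-a)). repeat split; auto.
  - unfold Comb. apply DistOf_inter with (g1 := EE u) (g2 := OO u); auto.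
    intros m. rewrite E2_e. lia. intros m. rewrite E2_o. lia.
  - unfold Comb. apply DistOf_inter with (g1 := EE u) (g2 := OO u); auto.
    intros m. rewrite O2_e. reflexivity. intros m. rewrite O2_o. lia.
  - lra.
  - lra.
  - rewrite A1, E1, O1, E0, O0. unfold hh. rewrite Nat.odd_even. simpl. lra.
  - rewrite B1, E1, O1, E0, O0. unfold hh. rewrite Nat.odd_even. rewrite opp_IZR. simpl. lra.
  - rewrite A2, B2, E0, O0, E1, O1, Hv, Hh, opp_IZR. rewrite <- E2.
    destruct Ha as [Ha|Ha]; rewrite Ha; simpl; lra.
Qed.

Lemma Qodd (v : nat -> R) (hv0 : v 0%nat = 0) (hv1 : v 1%nat = 3 / 2) (hv4 : forall t : nat, v (4 * t)%nat = v (2 * t)%nat) (hv42 : forall t : nat, v (4 * t + 2)%nat = v (2 * t + 1)%nat + 1) (hv21 : forall t : nat, v (2 * t + 1)%nat = (v t + v (t + 1)%nat) / 2 + 3 / 4) u : Qp v u -> Qp v (u+1) -> Qp v (2*u+1).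
Proof.
  intros [e [o [De [Do [Ge [Go [E0 [O0 [E1 [O1 E2]]]]]]]]]].
  intros [e' [o' [De' [Do' [Ge' [Go' [E0' [O0' [E1' [O1' E2']]]]]]]]]].
  pose proof (oddz_cases u) as Ha. pose proof (hh_oddz u) as Hh. pose proof (hh_oddz (u+1)) as Hh'.
  rewrite oddz_S in Hh'. pose proof (hv21 u) as Hv.
  set (a := oddz u) in *.
  assert (Ha' : (a = -1 \/ a = 0 \/ a = 1)%Z) by lia.
  assert (Hna : ((1 - a) = -1 \/ (1 - a) = 0 \/ (1 - a) = 1)%Z) by lia.
  pose proof (Comb_props e a o (1 - a) Ha' Hna Ge Go) as [G1 [A0 [A1 A2]]].
  pose proof (Comb_props e' 0 o' (-1) ltac:(lia) ltac:(lia) Ge' Go') as [G2 [B0 [B1 B2]]].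
  exists (Comb e a o (1 - a)), (Comb e' 0 o' (-1)). repeat split; auto.
  - unfold Comb. apply DistOf_inter with (g1 := EE u) (g2 := OO u); auto.
    intros m. rewrite E1_e. reflexivity. intros m. rewrite E1_o. reflexivity.
  - unfold Comb. apply DistOf_inter with (g1 := EE (u+1)) (g2 := OO (u+1)); auto.
    intros m. rewrite O1_e. lia. intros m. rewrite O1_o. lia.
  - lra.
  - lra.
  - rewrite A1, E1, O1, E0, O0, Hh. unfold hh. rewrite Nat.odd_odd. rewrite minus_IZR. simpl. lra.
  - rewrite B1, E1', O1', E0', O0'. unfold hh. rewrite Nat.odd_odd. simpl. lra.
  - rewrite A2, B2, E0, O0, E1, O1, E0', O0', E1', O1', Hv, Hh, Hh', minus_IZR.
    rewrite <- E2, <- E2'.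
    destruct Ha as [Ha|Ha]; rewrite Ha; simpl; lra.
Qed.

Lemma Qall (v : nat -> R) (hv0 : v 0%nat = 0) (hv1 : v 1%nat = 3 / 2) (hv4 : forall t : nat, v (4 * t)%nat = v (2 * t)%nat) (hv42 : forall t : nat, v (4 * t + 2)%nat = v (2 * t + 1)%nat + 1) (hv21 : forall t : nat, v (2 * t + 1)%nat = (v t + v (t + 1)%nat) / 2 + 3 / 4) t : Qp v t.
Proof.
  induction t as [t IH] using (well_founded_induction lt_wf).
  destruct t as [|[|t']].
  - apply Q0; auto.
  - apply Q1; auto.
  - destruct (Nat.Even_or_Odd (S (S t'))) as [[u Hu]|[u Hu]]; rewrite Hu in *.
    + apply Qeven; auto. apply IH. lia.
    + apply Qodd; auto; apply IH; lia.
Qed.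


Lemma Zsum_ext g h l : (forall k, g k = h k) -> Zsum_abs g l -> Zsum_abs h l.
Proof.
  intros H [A B]. split.
  - apply ex_series_ext with (fun n => Rabs (g (Z.of_nat n)) + Rabs (g (- Z.of_nat n)%Z)); auto.
    intros; rewrite !H; auto.
  - apply is_series_ext with (fun n => match n with O => g 0%Z | S _ => g (Z.of_nat n) + g (- Z.of_nat n)%Z end); auto.
    intros [|n]; rewrite !H; auto.
Qed.

Theorem proposition3p5 (v : nat -> R)
  (hv0 : v 0%nat = 0) (hv1 : v 1%nat = 3 / 2)
  (hv4 : forall t : nat, v (4 * t)%nat = v (2 * t)%nat)
  (hv42 : forall t : nat, v (4 * t + 2)%nat = v (2 * t + 1)%nat + 1)
  (hv21 : forall t : nat, v (2 * t + 1)%nat = (v t + v (t + 1)%nat) / 2 + 3 / 4)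
  (t : nat) :
  exists c : Z -> R,
    (forall k : Z, has_density_d t k (c k)) /\
    Zsum_abs (fun k => IZR k * c k) 0 /\
    Zsum_abs (fun k => (IZR k - 0) ^ 2 * c k) (v t).
Proof.
  destruct (Qall v hv0 hv1 hv4 hv42 hv21 t) as [e [o [De [Do [Ge [Go [E0 [O0 [E1 [O1 E2]]]]]]]]]].
  pose proof (Comb_props e 0 o 0 ltac:(lia) ltac:(lia) Ge Go) as [G [A0 [A1 A2]]].
  exists (Comb e 0 o 0). split; [|split].
  - assert (D : DistOf (d t) (Comb e 0 o 0)).
    { unfold Comb. apply DistOf_inter with (g1 := EE t) (g2 := OO t); auto.
      intros m. unfold EE. lia. intros m. unfold OO. lia. }
    intros k. exact (D k).
  - apply Zsum_ext with (fun k => IZR k ^ 1 * Comb e 0 o 0 k). intros; simpl; ring.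
    replace 0 with (mom (Comb e 0 o 0) 1).
    apply Zsum_of_T. apply mom_AbsZ; auto.
    rewrite A1, E1, O1. simpl. lra.
  - apply Zsum_ext with (fun k => IZR k ^ 2 * Comb e 0 o 0 k). intros; simpl; ring.
    replace (v t) with (mom (Comb e 0 o 0) 2).
    apply Zsum_of_T. apply mom_AbsZ; auto.
    rewrite A2. simpl. lra.
Qed.
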